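(* Fix an integer $q\ge 2$ and an integer $s\ge 0$. For $n\ge1$, $N=\{1,\dots,n\}$, let $F^c=\{-\tfrac{q-1}{2},\dots,\tfrac{q-1}{2}\}$ (step $1$), $\Omega=(F^c)^N$, and for couplings $J_A\ge 0$ ($A\subset N$, $|A|\ge2$) let $x_A=e^{J_A}$ and $Z_\gamma=\prod_A x_A^{\delta_{(\sigma^A)_\gamma}}$, where $\delta_{(\sigma^A)_\gamma}=1$ if all coordinates $(\sigma_i)_\gamma$, $i\in A$, are equal and $0$ otherwise. For a list $R$ of elements of $N$ (repetitions allowed) and $A'\subset\Omega$ put $\zeta(R,A')=\sum_{\gamma\in A'}(\sigma^R)_\gamma Z_\gamma$, where $(\sigma^R)_\gamma=\prod_{i\in R}(\sigma_i)_\gamma$ with multiplicity, and $\zeta(R)=\zeta(R,\Omega)$. Suppose that $\zeta(R)\ge 0$ for every $n\ge1$, every list $R$ of elements of $\{1,\dots,n\}$, and every choice of couplings with at most $s$ nonzero $J_A$. Then for every $n$, every list $R$ of elements of $N$, every choice of couplings with $s$ nonzero $J_A$, and every $B\subset N$, we have $\zeta(R,B^{(1)})\ge 0$, where $B^{(1)}=\{\gamma\in\Omega:\delta_{(\sigma^B)_\gamma}=1\}$.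
   Context: $\zeta(R)$ equals $Z\langle\sigma^R\rangle$ for the generalized Potts Gibbs measure $P(\gamma)=Z_\gamma/Z$, $Z=\sum_\gamma Z_\gamma$, with centered spin values. The paper's hypothesis is phrased as ''$\zeta^N_s(R)\ge0$ for any $n$ vertices and $q$ number of spins''; it is here read as holding for all systems with at most $s$ nonzero couplings. *)

(* Defs.v *)
From HB Require Import structures.
From mathcomp Require Import all_boot all_order all_algebra.
From mathcomp Require Import reals.
From mathcomp Require Import sequences.
Set Implicit Arguments. Unset Strict Implicit. Unset Printing Implicit Defensive.
Import Order.TTheory GRing.Theory Num.Theory.
Local Open Scope ring_scope.

(* A configuration gamma : N -> {0,..,q-1}; spin index k stands for the
   centered value k - (q-1)/2, so spins range over {-(q-1)/2,...,(q-1)/2}. *)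
Definition config (q n : nat) := {ffun 'I_n -> 'I_q}.

Definition spin {R : realType} (q : nat) (k : 'I_q) : R :=
  (k : nat)%:R - (q.-1)%:R / 2.

Definition delta (q n : nat) (A : {set 'I_n}) (g : config q n) : bool :=
  [forall i in A, forall j in A, g i == g j].

Definition Zg {R : realType} (q n : nat) (J : {set 'I_n} -> R) (g : config q n) : R :=
  \prod_(A : {set 'I_n} | (2 <= #|A|)%N) (expR (J A)) ^+ (delta A g).

Definition sigmaR {R : realType} (q n : nat) (Rl : seq 'I_n) (g : config q n) : R :=
  \prod_(i <- Rl) spin (R:=R) (g i).

Definition zeta {R : realType} (q n : nat) (J : {set 'I_n} -> R)
  (Rl : seq 'I_n) (A' : {set config q n}) : R :=
  \sum_(g in A') sigmaR (R:=R) Rl g * Zg J g.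

Definition B1 (q n : nat) (B : {set 'I_n}) : {set config q n} :=
  [set g | delta B g].

Definition couplings_nonneg {R : realType} (n : nat) (J : {set 'I_n} -> R) : Prop :=
  forall A : {set 'I_n}, (2 <= #|A|)%N -> 0 <= J A.

Definition num_nonzero {R : realType} (n : nat) (J : {set 'I_n} -> R) : nat :=
  #|[set A : {set 'I_n} | (2 <= #|A|)%N && (J A != 0)]|.

(* Main.v *)
Require Import Defs.
From HB Require Import structures.
From mathcomp Require Import all_boot all_order all_algebra.
From mathcomp Require Import reals.
From mathcomp Require Import sequences exp.
Import Order.TTheory GRing.Theory Num.Theory.
Local Open Scope ring_scope.
Section Red.
Variables (R : realType) (q n m : nat) (f : 'I_n -> 'I_m) (g : 'I_m -> 'I_n).
Variable B : {set 'I_n}.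
Hypothesis fgK : cancel g f.
Hypothesis gf : forall i, g (f i) = i \/ (i \in B /\ g (f i) \in B).
Hypothesis fB : forall i j, i \in B -> j \in B -> f i = f j.

Definition h (c : config q m) : config q n := [ffun i => c (f i)].

Lemma h_inj : injective h.
Proof.
move=> c1 c2 E; apply/ffunP=> j.
have := congr1 (fun c : config q n => c (g j)) E; rewrite /h !ffunE fgK //.
Qed.

Lemma delta_h A c : delta A (h c) = delta (f @: A) c.
Proof.
apply/idP/idP.
- move=> /forall_inP H; apply/forall_inP=> x /imsetP [i Hi ->].
  apply/forall_inP=> y /imsetP [j Hj ->].
  by have := forall_inP (H i Hi) j Hj; rewrite /h !ffunE.
- move=> /forall_inP H; apply/forall_inP=> i Hi; apply/forall_inP=> j Hj.
  rewrite /h !ffunE.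
  exact: (forall_inP (H _ (imset_f f Hi)) _ (imset_f f Hj)).
Qed.

Lemma B1_img : B1 q B = h @: setT.
Proof.
apply/setP=> e; rewrite inE; apply/idP/imsetP.
- move=> He; exists [ffun j => e (g j)]; first by [].
  apply/ffunP=> i; rewrite /h !ffunE.
  case: (gf i) => [-> // | [iB gB]].
  by move/forall_inP: He => /(_ _ iB) /forall_inP /(_ _ gB) /eqP.
- move=> [c _ ->]; apply/forall_inP=> i iB; apply/forall_inP=> j jB.
  by rewrite /h !ffunE (fB _ _ iB jB).
Qed.

Definition Jr (J : {set 'I_n} -> R) (A' : {set 'I_m}) : R :=
  \sum_(A : {set 'I_n} | (2 <= #|A|)%N && (f @: A == A')) J A.

Definition Cst (J : {set 'I_n} -> R) : R :=
  \prod_(A : {set 'I_n} | (2 <= #|A|)%N && ~~ (2 <= #|f @: A|)%N) expR (J A).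

Lemma powb (x : R) (b : bool) : x ^+ b = if b then x else 1.
Proof. by case: b. Qed.

Lemma Zg_h J c : Zg J (h c) = Cst J * Zg (Jr J) c.
Proof.
rewrite /Zg (bigID (fun A : {set 'I_n} => (2 <= #|f @: A|)%N)) /= mulrC.
congr (_ * _).
- apply: eq_bigr=> A /andP [_ H]; rewrite delta_h.
  have -> : delta (f @: A) c.
    apply/forall_inP=> x Hx; apply/forall_inP=> y Hy.
    have /card_le1_eqP E : (#|f @: A| <= 1)%N by rewrite leqNgt.
    by rewrite (E x y Hx Hy).
  by [].
- rewrite (partition_big (P := fun A : {set 'I_n} => (2 <= #|A|)%N && (2 <= #|f @: A|)%N) (fun A => f @: A) (fun A' : {set 'I_m} => (2 <= #|A'|)%N)) /=;
    last by move=> A /andP [].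
  apply: eq_bigr=> A' HA'.
  rewrite /Jr expR_sum.
  rewrite (eq_bigr (fun A => expR (J A) ^+ delta A' c)); last first.
    by move=> A /andP [_ /eqP E]; rewrite delta_h E.
  case: (delta A' c); last by rewrite expr0 big1 // => A _; rewrite expr0.
  rewrite expr1; under eq_bigr do rewrite expr1.
  apply: eq_bigl=> A; apply/idP/idP.
  * by move=> /andP [/andP [-> _] ->].
  * by move=> /andP [H1 /eqP E]; rewrite H1 E HA' eqxx.
Qed.

Lemma sigma_h (Rl : seq 'I_n) c : sigmaR Rl (h c) = sigmaR (R:=R) (map f Rl) c.
Proof. by rewrite /sigmaR big_map; apply: eq_bigr=> i _; rewrite /h ffunE. Qed.

Lemma zeta_red J Rl : zeta J Rl (B1 q B) = Cst J * zeta (Jr J) (map f Rl) [set: config q m].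
Proof.
rewrite /zeta B1_img big_imset; last by move=> x y _ _; apply: h_inj.
rewrite mulr_sumr; apply: eq_big=> c; first by rewrite !inE.
by move=> _; rewrite sigma_h Zg_h mulrCA.
Qed.

Lemma Cst_gt0 J : 0 < Cst J.
Proof. by apply: prodr_gt0=> A _; apply: expR_gt0. Qed.

Lemma Jr_nonneg J : couplings_nonneg J -> couplings_nonneg (Jr J).
Proof.
move=> HJ A' _; apply: sumr_ge0=> A /andP [H _]; exact: HJ.
Qed.

Lemma Jr_num J : (num_nonzero (Jr J) <= num_nonzero J)%N.
Proof.
rewrite /num_nonzero.
apply: (leq_trans _ (leq_imset_card (fun A : {set 'I_n} => f @: A) [set A : {set 'I_n} | (2 <= #|A|)%N && (J A != 0)])).
apply: subset_leq_card; apply/subsetP=> A'; rewrite inE => /andP [H2 HJ].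
have [A HA] : exists A : {set 'I_n}, [&& (2 <= #|A|)%N, f @: A == A' & J A != 0].
  apply/existsP; apply: contraR HJ; rewrite negb_exists => /forallP HA.
  rewrite /Jr big1 // => A /andP [a1 a2].
  by have := HA A; rewrite a1 a2 /= negbK => /eqP.
case/and3P: HA => a1 /eqP a2 a3; apply/imsetP; exists A; last by rewrite a2.
by rewrite inE a1 a3.
Qed.
End Red.

Theorem lemma2 (R : realType) (q s : nat) (hq : (2 <= q)%N) :
  (forall (n : nat) (J : {set 'I_n} -> R) (Rl : seq 'I_n),
      (1 <= n)%N -> couplings_nonneg J -> (num_nonzero J <= s)%N ->
      0 <= zeta J Rl [set: config q n]) ->
  forall (n : nat) (J : {set 'I_n} -> R) (Rl : seq 'I_n) (B : {set 'I_n}),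
    (1 <= n)%N -> couplings_nonneg J -> num_nonzero J = s ->
    0 <= zeta J Rl (B1 q B).
Proof.
move=> H n J Rl B hn HJ Hs.
pose x0 : 'I_n := Ordinal hn.
pose rep i := if i \in B then odflt i [pick x in B] else i.
have repB i : i \in B -> rep i \in B /\ forall j, j \in B -> rep j = rep i.
  move=> iB; rewrite /rep iB; case: pickP => [x xB|/(_ i)]; last by rewrite iB.
  by split=> // j ->.
have repK i : rep (rep i) = rep i.
  case iB : (i \in B); last by rewrite /rep iB iB.
  by have [r1 r2] := repB i iB; rewrite (r2 _ r1).
pose S := [set rep i | i in [set: 'I_n]].
have Hx : rep x0 \in S by apply: imset_f; rewrite inE.
pose f i := enum_rank_in Hx (rep i).
pose g (j : 'I_#|S|) := (enum_val j : 'I_n).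
have fgK : cancel g f.
  move=> j; rewrite /f /g; have /imsetP [k _ Ek] := enum_valP j.
  by rewrite Ek repK -Ek enum_valK_in.
have gf i : g (f i) = i \/ (i \in B /\ g (f i) \in B).
  rewrite /g /f enum_rankK_in; last by apply: imset_f; rewrite inE.
  case iB : (i \in B); last by left; rewrite /rep iB.
  by right; split=> //; case: (repB i iB).
have fB i j : i \in B -> j \in B -> f i = f j.
  by move=> iB jB; rewrite /f ((repB i iB).2 j jB).
rewrite (@zeta_red R q n _ f g B fgK gf fB); apply: mulr_ge0; first exact/ltW/Cst_gt0.
apply: H.
- by apply/card_gt0P; exists (rep x0).
- exact: Jr_nonneg.
- by rewrite -Hs; apply: Jr_num.
Qed.
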